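(* Let $k$ be an algebraically closed field of characteristic $0$ and let $(\mathcal A,-)$ be an associative torus with involution over $k$. If $(\mathcal A,-)$ is not isomorphic (as an algebra with involution) to $(\mathcal Q(-1),\natural)\otimes(R_q,1)$ for any $q\ge0$, then $[\mathcal A_-,\mathcal A_-]\subseteq\mathcal A_+\mathcal A_+$.
   Context: Let $\Lambda$ be a finitely generated free abelian group. An associative $\Lambda$-torus is a $\Lambda$-graded unital associative $k$-algebra $\mathcal A=\bigoplus_{\lambda\in\Lambda}\mathcal A^\lambda$ in which every $\mathcal A^\lambda$ is spanned by an invertible element. An associative torus with involution $(\mathcal A,-)$ is an associative torus together with a graded involution (a grading-preserving $k$-linear anti-automorphism of period $2$). $\mathcal A_+=\{x:\bar x=x\}$, $\mathcal A_-=\{x:\bar x=-x\}$; $[\mathcal A_-,\mathcal A_-]$ is the span of commutators $xy-yx$ with $x,y\in\mathcal A_-$, and $\mathcal A_+\mathcal A_+$ is the span of products $xy$ with $x,y\in\mathcal A_+$. $R_q=k[t_1^{\pm1},\dots,t_q^{\pm1}]$ with its $\mathbb Z^q$-grading and trivial involution $1$. $\mathcal Q(-1)$ is the $\mathbb Z^2$-graded algebra generated by $x_1^{\pm1},x_2^{\pm1}$ with relations $x_ix_i^{-1}=x_i^{-1}x_i=1$ and $x_1x_2=-x_2x_1$; $\natural$ is its involution with $x_1^\natural=-x_1$, $x_2^\natural=-x_2$. Tensor products of associative tori with involution are graded by the direct sum of the grading groups, with the tensor product involution. *)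

(* Defs.v *)
From HB Require Import structures.
From mathcomp Require Import all_boot all_order all_algebra.
Set Implicit Arguments. Unset Strict Implicit. Unset Printing Implicit Defensive.
Import Order.TTheory GRing.Theory Num.Theory.
Local Open Scope ring_scope.

(* The grading group Lambda (f.g. free abelian) is taken to be Z^n = 'rV[int]_n. *)
Definition lattice (n : nat) := 'rV[int]_n.

(* A Lambda-grading of A is given by the family of homogeneous components
   comp l (as predicates on A).  (A, comp) is an associative Lambda-torus:
   - each component A^l is spanned by an invertible element,
   - A^l A^m  <=  A^(l+m),
   - A is the direct sum of the A^l (every element is a finite sum of
     homogeneous elements, and homogeneous elements of pairwise distinct
     degrees summing to 0 are all 0). *)
Definition assoc_torus (k : fieldType) (A : unitAlgType k) (n : nat)
    (comp : lattice n -> A -> Prop) : Prop :=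
  [/\ (forall l, exists u : A, u \is a GRing.unit /\
          (forall x, comp l x <-> exists c : k, x = c *: u)),
      (forall l m x y, comp l x -> comp m y -> comp (l + m) (x * y)),
      (forall x : A, exists (s : seq (lattice n)) (f : lattice n -> A),
          (forall l, comp l (f l)) /\ x = \sum_(l <- s) f l) &
      (forall (s : seq (lattice n)) (f : lattice n -> A), uniq s ->
          (forall l, comp l (f l)) -> \sum_(l <- s) f l = 0 ->
          forall l, l \in s -> f l = 0)].

Definition graded_involution (k : fieldType) (A : unitAlgType k) (n : nat)
    (comp : lattice n -> A -> Prop) (inv : A -> A) : Prop :=
  [/\ (forall (a : k) (x y : A), inv (a *: x + y) = a *: inv x + inv y),
      (forall x y : A, inv (x * y) = inv y * inv x),
      inv 1 = 1,
      (forall x : A, inv (inv x) = x) &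
      (forall l x, comp l x -> comp l (inv x))].

(* (A, inv) is isomorphic, as a k-algebra with involution, to
   (Q(-1), natural) (x) (R_q, 1).  The latter algebra is presented by the
   invertible generators x1, x2, t_1..t_q with x1 x2 = - x2 x1 and all other
   pairs commuting, its monomials x1^a x2^b t^c (a, b in Z, c in Z^q) form a
   k-basis, and its involution is the anti-automorphism with x1 |-> -x1,
   x2 |-> -x2, t_i |-> t_i.  An isomorphism from it onto A is therefore the
   same as a choice of images X1, X2, T_i in A of the generators satisfying
   the defining relations, compatible with the involutions, and such that
   the image monomials form a k-basis of A. *)
Definition monomial (k : fieldType) (A : unitAlgType k) (q : nat)
    (X1 X2 : A) (T : 'I_q -> A) (e : int * int * 'rV[int]_q) : A :=
  X1 ^ e.1.1 * X2 ^ e.1.2 * \prod_(i < q) T i ^ (e.2 0 i).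

Definition iso_Qm1_tensor_R (k : fieldType) (A : unitAlgType k)
    (inv : A -> A) (q : nat) : Prop :=
  exists (X1 X2 : A) (T : 'I_q -> A),
    (X1 \is a GRing.unit /\ X2 \is a GRing.unit /\
     (forall i, T i \is a GRing.unit)) /\
    (X1 * X2 = - (X2 * X1) /\
     (forall i, X1 * T i = T i * X1) /\
     (forall i, X2 * T i = T i * X2) /\
     (forall i j, T i * T j = T j * T i)) /\
    (inv X1 = - X1 /\ inv X2 = - X2 /\ (forall i, inv (T i) = T i)) /\
    (forall x : A, exists (s : seq (int * int * 'rV[int]_q))
          (c : int * int * 'rV[int]_q -> k),
        x = \sum_(e <- s) c e *: monomial X1 X2 T e) /\
    (forall (s : seq (int * int * 'rV[int]_q)) (c : int * int * 'rV[int]_q -> k),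
        uniq s -> \sum_(e <- s) c e *: monomial X1 X2 T e = 0 ->
        forall e, e \in s -> c e = 0).

Definition in_span_sym_products (k : fieldType) (A : unitAlgType k)
    (inv : A -> A) (z : A) : Prop :=
  exists s : seq (k * A * A),
    (forall p, p \in s -> inv p.1.2 = p.1.2 /\ inv p.2 = p.2) /\
    z = \sum_(p <- s) p.1.1 *: (p.1.2 * p.2).

(* Main.v *)
Require Import Defs.
From HB Require Import structures.
From mathcomp Require Import all_boot all_order all_algebra perm.
From mathcomp Require Import ring.
From Stdlib Require Import IndefiniteDescription Classical.
Set Implicit Arguments. Unset Strict Implicit. Unset Printing Implicit Defensive.
Import Order.TTheory GRing.Theory Num.Theory.
Local Open Scope ring_scope.


Section Lat.
Variable n : nat.
Implicit Types (chi : 'rV[int]_n -> bool).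

Definition addchar chi := forall a b, chi (a + b) = chi a (+) chi b.

Lemma chi0 chi : addchar chi -> chi 0 = false.
Proof. by move=> h; have := h 0 0; rewrite addr0; case: (chi 0). Qed.

Lemma chiN chi a : addchar chi -> chi (- a) = chi a.
Proof.
move=> h; have := h a (- a); rewrite subrr chi0 //.
by case: (chi a); case: (chi (- a)).
Qed.

Lemma chiZ chi (z : int) a : addchar chi -> chi (z *: a) = odd `|z|%N && chi a.
Proof.
move=> h.
have hn (m : nat) : chi ((m%:Z) *: a) = odd m && chi a.
  elim: m => [|m IH]; first by rewrite scale0r chi0.
  have -> : (m.+1)%:Z = 1 + m%:Z by rewrite intS.
  rewrite scalerDl scale1r h IH /=.
  by case: (odd m); case: (chi a).
case: z => m; first exact: hn.
by rewrite NegzE scaleNr chiN // hn.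
Qed.

Lemma chi_sum chi (I : Type) (r : seq I) (F : I -> 'rV[int]_n) : addchar chi ->
  chi (\sum_(i <- r) F i) = \big[addb/false]_(i <- r) chi (F i).
Proof.
move=> h; elim: r => [|i r IH]; first by rewrite !big_nil chi0.
by rewrite !big_cons h IH.
Qed.

Lemma chi_mul chi (w : 'rV[int]_n) (M : 'M[int]_n) : addchar chi ->
  chi (w *m M) = \big[addb/false]_k (odd `|w ord0 k|%N && chi (row k M)).
Proof.
move=> h; rewrite mulmx_sum_row chi_sum //.
by apply: eq_bigr => k _; rewrite chiZ.
Qed.

Lemma bigxor_true (F : 'I_n -> bool) : \big[addb/false]_k F k -> exists k, F k.
Proof.
move=> h; apply/existsP; apply: contraLR h => /existsPn hn.
by rewrite big1 // => k _; apply/negbTE.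
Qed.

Lemma bigxor_one (F : 'I_n -> bool) i : (forall k, k != i -> F k = false) ->
  \big[addb/false]_k F k = F i.
Proof.
move=> h; rewrite (bigD1 i) //= big1 ?addbF // => k /andP[_ ki].
Qed.

Definition tv (c : 'I_n) (P : 'I_n -> bool) : 'M[int]_n :=
  1%:M - \matrix_(a, b) ((b == c) && P a && (a != c))%:R.

Lemma tv_unit c P : tv c P \in unitmx.
Proof.
set N := \matrix_(a, b) ((b == c) && P a && (a != c))%:R : 'M[int]_n.
have NN : N *m N = 0.
  apply/matrixP=> a b; rewrite !mxE big1 // => d _; rewrite !mxE.
  by case: (d == c) / eqP => [->|]; rewrite ?eqxx ?andbF ?mulr0 ?mul0r //=.
have h : tv c P *m (1%:M + N) = 1%:M.
  by rewrite /tv mulmxBl mul1mx mulmxDr mulmx1 NN addr0 addrK.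
by case: (mulmx1_unit h).
Qed.

Lemma tv_row c P k : row k (tv c P) =
  delta_mx 0 k - (P k && (k != c))%:R *: delta_mx 0 c.
Proof.
apply/rowP=> b; rewrite !mxE eqxx /=.
rewrite [k == b]eq_sym -andbA; congr (_ - _).
by case: (b == c); case: (P k && _); rewrite ?mulr1 ?mulr0.
Qed.

Lemma row_tv_mul c P k (E : 'M[int]_n) :
  row k (tv c P *m E) = row k E - (P k && (k != c))%:R *: row c E.
Proof. by rewrite row_mul tv_row mulmxBl -scalemxAl -!rowE. Qed.

Lemma chi_row_tv chi c P k (E : 'M[int]_n) : addchar chi ->
  chi (row k (tv c P *m E)) = chi (row k E) (+) (P k && (k != c) && chi (row c E)).
Proof.
move=> h; rewrite row_tv_mul h chiN //.
case: (P k && _); rewrite /= ?mulr1n ?mulr0n ?scale1r ?scale0r ?chi0 ?addbF //.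
Qed.

Lemma lattice_basis chi1 chi2 lam mu : addchar chi1 -> addchar chi2 ->
  chi1 mu -> ~~ chi1 lam -> chi2 lam ->
  exists (i j : 'I_n) (E : 'M[int]_n), [/\ i != j, E \in unitmx, chi1 (row i E),
    ~~ chi1 (row j E) & chi2 (row j E)] /\
    (forall k, k != i -> k != j -> ~~ chi1 (row k E) && ~~ chi2 (row k E)).
Proof.
move=> a1 a2 hmu hlam1 hlam2.
have [i hi] : exists i, chi1 (row i (1%:M : 'M[int]_n)).
  move: hmu; rewrite -[mu]mulmx1 chi_mul // => /bigxor_true [i /andP[_ hi]].
  by exists i.
set P1 := fun a => chi1 (row a (1%:M : 'M[int]_n)).
set E1 := tv i P1 *m 1%:M.
have E1u : E1 \in unitmx by rewrite unitmx_mul tv_unit unitmx1.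
have f1 kk : chi1 (row kk E1) = (kk == i).
  rewrite chi_row_tv // hi andbT /P1.
  case: (kk == i) / eqP => [->|]; rewrite ?eqxx ?andbF ?addbF //=.
  by move=> _; rewrite andbT addbb.
set Gh := fun a => chi2 (row a E1).
have [j /andP[ji hj]] : exists j, (j != i) && Gh j.
  apply/existsP; have [//|/existsPn hn] := boolP [exists x, (x != i) && Gh x]; exfalso.
  have hn' kk : kk != i -> Gh kk = false.
    by move=> kn; have := hn kk; rewrite kn /= => /negbTE.
  set w := lam *m invmx E1.
  have lamE : lam = w *m E1 by rewrite /w mulmxKV.
  have c1 : chi1 lam = odd `|w ord0 i|%N.
    rewrite lamE chi_mul // (bigxor_one (i := i)); first by rewrite f1 eqxx andbT.
    by move=> kk kn; rewrite f1 (negbTE kn) andbF.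
  have c2 : chi2 lam = odd `|w ord0 i|%N && Gh i.
    rewrite lamE chi_mul // (bigxor_one (i := i)) //.
    by move=> kk kn; rewrite [chi2 _]hn' ?andbF.
  by move: hlam1 hlam2; rewrite c1 c2 => /negbTE ->.
set P2 := fun a => Gh a && (a != i).
set E := tv j P2 *m E1.
have g1 kk : chi1 (row kk E) = (kk == i).
  by rewrite chi_row_tv // !f1 (negbTE ji) andbF addbF.
have g2 kk : chi2 (row kk E) = Gh kk && ~~ ((kk != i) && (kk != j)).
  rewrite chi_row_tv // /P2 -/(Gh kk) -/(Gh j) hj andbT.
  by case: (Gh kk); case: (kk != i); case: (kk != j).
exists i, j, E; split; first split.
- by rewrite eq_sym.
- by rewrite unitmx_mul tv_unit.
- by rewrite g1 eqxx.
- by rewrite g1 (negbTE ji).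
- by rewrite g2 hj eqxx andbF.
move=> kk ki kj; rewrite g1 g2 (negbTE ki) /=.
by rewrite kj andbF.
Qed.

End Lat.


Definition sg (k : nzRingType) (b : bool) : k := if b then -1 else 1.

Section Torus.
Variables (k : closedFieldType) (hchar : [pchar k] =i pred0)
    (A : unitAlgType k) (n : nat) (comp : lattice n -> A -> Prop)
    (inv : A -> A).
Hypotheses (htorus : assoc_torus comp) (hinv : graded_involution comp inv).

Lemma two_neq0 : (2%:R : k) != 0.
Proof. by have /pcharf0P -> := hchar. Qed.

Lemma neg_neq (x : A) : x != 0 -> x != - x.
Proof.
move=> x0; apply/eqP=> h; move/eqP: x0; apply.
have : (2%:R : k) *: x = 0 by rewrite scaler_nat mulr2n {1}h addNr.
by move/eqP; rewrite scaler_eq0 (negbTE two_neq0) => /eqP.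
Qed.

Lemma sg_neq : (1 : k) != -1.
Proof.
apply/eqP=> h; move/eqP: two_neq0; apply.
by rewrite mulr2n {1}h addNr.
Qed.

Lemma sg_inj (a b : bool) : sg k a = sg k b -> a = b.
Proof.
case: a; case: b => //= h; move: sg_neq; [move/eqP: h; rewrite eq_sym => /eqP h|]; by move/eqP.
Qed.

Lemma sgX (a b : bool) : sg k (a (+) b) = sg k a * sg k b.
Proof. by case: a; case: b; rewrite /= ?mulr1 ?mul1r ?mulrNN ?mulr1. Qed.

Lemma sgK (a : bool) : sg k a * sg k a = 1.
Proof. by case: a; rewrite /= ?mulrNN mulr1. Qed.

Lemma scale_cancel (a b : k) (x : A) : x != 0 -> a *: x = b *: x -> a = b.
Proof.
move=> x0 h; apply/eqP; rewrite -subr_eq0.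
have : (a - b) *: x == 0 by rewrite scalerBl h subrr.
by rewrite scaler_eq0 (negbTE x0) orbF.
Qed.

Lemma hu l : exists u : A, u \is a GRing.unit /\
          (forall x, comp l x <-> exists c : k, x = c *: u).
Proof. by case: htorus. Qed.

Definition u l : A := proj1_sig (constructive_indefinite_description _ (hu l)).

Lemma u_spec l : u l \is a GRing.unit /\
          (forall x, comp l x <-> exists c : k, x = c *: u l).
Proof. exact: (proj2_sig (constructive_indefinite_description _ (hu l))). Qed.

Lemma u_unit l : u l \is a GRing.unit. Proof. by case: (u_spec l). Qed.
Lemma compP l x : comp l x <-> exists c : k, x = c *: u l.
Proof. by case: (u_spec l). Qed.

Lemma unit_neq0 (x : A) : x \is a GRing.unit -> x != 0.
Proof. by apply: contraTneq => ->; rewrite unitr0. Qed.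

Lemma u_neq0 l : u l != 0. Proof. exact: unit_neq0 (u_unit l). Qed.

Lemma comp_u l : comp l (u l). Proof. by apply/compP; exists 1; rewrite scale1r. Qed.

Lemma compZ l c x : comp l x -> comp l (c *: x).
Proof. by case/compP=> a ->; apply/compP; exists (c * a); rewrite scalerA. Qed.

Lemma comp0 l : comp l 0.
Proof. by apply/compP; exists 0; rewrite scale0r. Qed.

Lemma compD l x y : comp l x -> comp l y -> comp l (x + y).
Proof.
case/compP=> a ->; case/compP=> b ->; apply/compP; exists (a + b).
by rewrite scalerDl.
Qed.

Lemma compM l m x y : comp l x -> comp m y -> comp (l + m) (x * y).
Proof. by case: htorus => _ h _ _; apply: h. Qed.

Lemma one_dim l x y : comp l x -> comp l y -> y != 0 -> exists c, x = c *: y.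
Proof.
case/compP=> a ->; case/compP=> b -> y0.
have b0 : b != 0 by apply: contraNneq y0 => ->; rewrite scale0r.
by exists (a / b); rewrite scalerA mulfVK.
Qed.

Lemma invDZ a x y : inv (a *: x + y) = a *: inv x + inv y.
Proof. by case: hinv. Qed.
Lemma invM x y : inv (x * y) = inv y * inv x. Proof. by case: hinv. Qed.
Lemma invK x : inv (inv x) = x. Proof. by case: hinv. Qed.
Lemma inv_comp l x : comp l x -> comp l (inv x). Proof. by case: hinv => _ _ _ _; apply. Qed.
Lemma inv0 : inv 0 = 0.
Proof.
have := invDZ 1 0 0; rewrite !scale1r addr0 => h.
by apply: (addrI (inv 0)); rewrite addr0 -h.
Qed.
Lemma invD x y : inv (x + y) = inv x + inv y.
Proof. by have := invDZ 1 x y; rewrite !scale1r. Qed.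
Lemma invZ a x : inv (a *: x) = a *: inv x.
Proof. by rewrite -[a *: x]addr0 invDZ inv0 addr0. Qed.
Lemma invN x : inv (- x) = - inv x.
Proof. by rewrite -scaleN1r invZ scaleN1r. Qed.
Lemma inv_sum (I : Type) (s : seq I) (F : I -> A) :
  inv (\sum_(i <- s) F i) = \sum_(i <- s) inv (F i).
Proof. exact: (big_morph inv invD inv0). Qed.

Definition eps l : bool := inv (u l) == - u l.

Lemma inv_u l : inv (u l) = sg k (eps l) *: u l.
Proof.
have [c hc] := one_dim (inv_comp (comp_u l)) (comp_u l) (u_neq0 l).
have c2 : c ^+ 2 = 1.
  have := invK (u l); rewrite hc invZ hc scalerA -expr2 => h.
  by apply: (scale_cancel (u_neq0 l)); rewrite h scale1r.
move/eqP: c2; rewrite sqrf_eq1 => /orP[] /eqP ce; rewrite /eps hc ce.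
  by rewrite scale1r (negbTE (neg_neq (u_neq0 l))) /= scale1r.
by rewrite scaleN1r eqxx /= scaleN1r.
Qed.

Definition q l m : bool := eps (l + m) (+) eps l (+) eps m.

Lemma comm_u l m : u m * u l = sg k (q l m) *: (u l * u m).
Proof.
have ulm0 : u l * u m != 0 by apply: unit_neq0; rewrite unitrMl ?u_unit.
have [c hc] := one_dim (compM (comp_u l) (comp_u m)) (comp_u (l + m)) (u_neq0 _).
have [d hd] : exists d, u m * u l = d *: u (l + m).
  apply: (@one_dim (l + m)) _ (comp_u _) (u_neq0 _).
  by rewrite addrC; apply: compM; apply: comp_u.
have e : sg k (eps m) * sg k (eps l) * d = c * sg k (eps (l + m)).
  apply: (scale_cancel (u_neq0 (l + m))).
  have := congr1 inv hc; rewrite invM !inv_u -scalerAl -scalerAr scalerA hd.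
  by rewrite invZ inv_u !scalerA => ->.
have dE : d = c * sg k (q l m).
  rewrite /q !sgX !mulrA -e; set a := sg k (eps m); set b := sg k (eps l).
  transitivity (d * (a * a) * (b * b)); first by rewrite /a /b !sgK !mulr1.
  ring.
by rewrite hd hc scalerA dE mulrC.
Qed.


Lemma comm_hom l m x y : comp l x -> comp m y -> y * x = sg k (q l m) *: (x * y).
Proof.
case/compP=> a ->; case/compP=> b ->.
rewrite -!scalerAl -!scalerAr comm_u !scalerA.
by congr (_ *: _); ring.
Qed.

Lemma unit_mul_neq0 (x y : A) : x \is a GRing.unit -> y \is a GRing.unit -> x * y != 0.
Proof. by move=> ux uy; apply: unit_neq0; rewrite unitrMl. Qed.

Lemma qC l m : q l m = q m l.
Proof. by rewrite /q addrC -!addbA [eps l (+) _]addbC. Qed.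

Lemma qll l : q l l = false.
Proof.
apply: sg_inj; apply: (scale_cancel (unit_mul_neq0 (u_unit l) (u_unit l))).
by rewrite [sg k false]/= scale1r -comm_u.
Qed.

Lemma q_add l m m' : q l (m + m') = q l m (+) q l m'.
Proof.
apply: sg_inj; rewrite sgX.
have y0 : u m * u m' != 0 by apply: unit_mul_neq0; apply: u_unit.
have uy : u m * u m' \is a GRing.unit by rewrite unitrMl ?u_unit.
apply: (scale_cancel (unit_mul_neq0 (u_unit l) uy)).
rewrite -(comm_hom (comp_u l) (compM (comp_u m) (comp_u m'))).
rewrite -mulrA (comm_u l m') -scalerAr [u m * (u l * _)]mulrA (comm_u l m) -scalerAl scalerA -mulrA.
by rewrite mulrC.
Qed.

Lemma eps0 : eps 0 = false.
Proof. by have := qll 0; rewrite /q addr0 addbb. Qed.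

Lemma q0 l : q l 0 = false.
Proof.
have := q_add l 0 0; rewrite addr0 => h.
by apply/negbTE/negP=> e; move: h; rewrite e.
Qed.

Lemma qN l m : q l (- m) = q l m.
Proof.
have := q_add l m (- m); rewrite subrr q0.
by case: (q l m); case: (q l (- m)).
Qed.

Lemma epsN l : eps (- l) = eps l.
Proof.
have := qN l l; rewrite qll /q subrr eps0 /=.
by case: (eps l); case: (eps (- l)).
Qed.

Lemma eps_add l m : eps (l + m) = eps l (+) eps m (+) q l m.
Proof. by rewrite /q; case: (eps (l + m)); case: (eps l); case: (eps m). Qed.

Definition S z := in_span_sym_products inv z.

Lemma S0 : S 0.
Proof. by exists [::]; split=> //; rewrite big_nil. Qed.

Lemma SD a b : S a -> S b -> S (a + b).
Proof.
case=> s1 [h1 ->]; case=> s2 [h2 ->]; exists (s1 ++ s2); split; last by rewrite big_cat.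
by move=> p; rewrite mem_cat => /orP[]; [apply: h1|apply: h2].
Qed.

Lemma SZ c a : S a -> S (c *: a).
Proof.
case=> s [h ->]; exists (map (fun p => (c * p.1.1, p.1.2, p.2)) s); split.
  by move=> p /mapP[p' /h hp' ->].
by rewrite big_map scaler_sumr; apply: eq_bigr => p _; rewrite scalerA.
Qed.

Lemma S_sum (I : Type) (r : seq I) (F : I -> A) :
  (forall i, S (F i)) -> S (\sum_(i <- r) F i).
Proof.
move=> hF; elim: r => [|i r IH]; first by rewrite big_nil; apply: S0.
by rewrite big_cons; apply: SD.
Qed.

Lemma S_prod c x y : inv x = x -> inv y = y -> S (c *: (x * y)).
Proof.
move=> hx hy; exists [:: (c, x, y)]; split; last by rewrite big_seq1.
by move=> p; rewrite inE => /eqP -> /=.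
Qed.

Lemma skew_eps l g : comp l g -> g != 0 -> inv g = - g -> eps l.
Proof.
case/compP=> a -> g0; rewrite invZ inv_u scalerA => h.
have a0 : a != 0 by apply: contraNneq g0 => ->; rewrite scale0r.
have : a * sg k (eps l) = a * -1.
  by apply: (scale_cancel (u_neq0 l)); rewrite h -scalerA scaleN1r scalerN.
move/(mulfI a0); case: (eps l) => //= e.
by move/eqP: sg_neq => /(_ e).
Qed.

Definition Good := forall l m, eps l -> eps m -> q l m ->
  exists nu, ~~ eps (l + nu) /\ ~~ eps (m - nu).

Lemma inv_u_sym l : ~~ eps l -> inv (u l) = u l.
Proof. by move/negbTE=> e; rewrite inv_u e scale1r. Qed.

Lemma S_hom (HG : Good) l m g h : comp l g -> comp m h ->
  inv g = - g -> inv h = - h -> S (g * h - h * g).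
Proof.
move=> hl hm ig ih; rewrite (comm_hom hl hm).
case qe : (q l m); last by rewrite /= scale1r subrr; apply: S0.
rewrite -{1}[g * h]scale1r -scalerBl; apply: SZ.
have [->|g0] := eqVneq g 0; first by rewrite mul0r; apply: S0.
have [->|h0] := eqVneq h 0; first by rewrite mulr0; apply: S0.
have [nu [e1 e2]] := HG l m (skew_eps hl g0 ig) (skew_eps hm h0 ih) qe.
have XY : comp (l + m) (u (l + nu) * u (m - nu)).
  have := compM (comp_u (l + nu)) (comp_u (m - nu)).
  by rewrite addrACA subrr addr0.
have XY0 : u (l + nu) * u (m - nu) != 0 by apply: unit_mul_neq0; apply: u_unit.
have [c ->] := one_dim (compM hl hm) XY XY0.
by apply: S_prod; apply: inv_u_sym.
Qed.

Lemma skew_decomp x : inv x = - x -> exists (s : seq (lattice n)) (g : lattice n -> A),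
  (forall l, comp l (g l) /\ inv (g l) = - g l) /\ x = \sum_(l <- s) g l.
Proof.
move=> hx; case: htorus => _ _ hdec _; have [s [f [hf xE]]] := hdec x.
have h2 := two_neq0.
exists s, (fun l => (2%:R : k)^-1 *: (f l - inv (f l))); split.
  move=> l; split.
    apply: compZ; apply: compD; first exact: hf.
    by rewrite -scaleN1r; apply: compZ; apply: inv_comp.
  by rewrite invZ invD invN invK -scalerN opprB.
have : x = (2%:R : k)^-1 *: (x - inv x).
  by rewrite hx opprK -mulr2n -scaler_nat scalerA mulVf // scale1r.
move=> ->; rewrite {1 2}xE inv_sum -sumrB scaler_sumr.
by apply: eq_bigr.
Qed.

Lemma good_case (HG : Good) x y : inv x = - x -> inv y = - y -> S (x * y - y * x).
Proof.
move=> /skew_decomp [s [g [hg ->]]] /skew_decomp [t [h [hh ->]]].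
rewrite mulr_suml mulr_sumr -sumrB; apply: S_sum => l.
rewrite mulr_sumr mulr_suml -sumrB; apply: S_sum => m.
have [g1 g2] := hg l; have [h1 h2] := hh m.
by apply: (@S_hom HG l m).

Qed.

Lemma q_sub l a b : q l (a - b) = q l a (+) q l b.
Proof. by rewrite q_add qN. Qed.

Lemma q_if l (b : bool) m : q l (if b then m else 0) = b && q l m.
Proof. by case: b; rewrite ?q0. Qed.

Section Bad.
Variables (la mu : lattice n).
Hypotheses (hla : eps la) (hmu : eps mu) (hq : q la mu)
  (hno : forall nu, ~ (~~ eps (la + nu) /\ ~~ eps (mu - nu))).

Definition inR r := ~~ q la r && ~~ q mu r.

Definition adj nu := nu - (if q mu nu then la else 0) - (if q la nu then mu else 0).

Lemma adj_R nu : inR (adj nu).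
Proof.
rewrite /inR /adj !q_sub !q_if qll (qC mu la) hq qll.
by case: (q la nu); case: (q mu nu).
Qed.

Lemma adjE nu : nu = adj nu + ((if q mu nu then la else 0) + (if q la nu then mu else 0)).
Proof.
rewrite /adj; set a := (if _ then _ else _); set b := (if _ then _ else _).
by rewrite [a + b]addrC addrA subrK subrK.
Qed.

Lemma R1 r : inR r -> ~~ eps r.
Proof.
case/andP=> /negbTE h1 /negbTE h2; apply/negP=> er; apply: (hno (nu := r)); split.
  by rewrite eps_add hla er h1.
by rewrite eps_add epsN hmu er qN h2.
Qed.

Lemma R_add a b : inR a -> inR b -> inR (a + b).
Proof.
by case/andP=> /negbTE a1 /negbTE a2 /andP[/negbTE b1 /negbTE b2]; rewrite /inR !q_add a1 a2 b1 b2.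
Qed.

Lemma eps_lamu : eps (la + mu).
Proof. by rewrite eps_add hla hmu hq. Qed.

Lemma R2 nu : ~~ inR nu -> eps nu.
Proof.
move=> hR; rewrite (adjE nu) eps_add (negbTE (R1 (adj_R nu))) /=.
have [/negbTE c1 /negbTE c2] : ~~ q (adj nu) la /\ ~~ q (adj nu) mu.
  by have /andP[] := adj_R nu; rewrite !(qC _ (adj nu)).
rewrite q_add !(q_if (adj nu)) c1 c2 !andbF addbF.
move: hR; rewrite /inR.
case: (q mu nu); case: (q la nu) => //= _; rewrite ?addr0 ?add0r ?addbF //.
exact: eps_lamu.
Qed.

Lemma R3 r sigma : inR r -> q sigma r = false.
Proof.
move=> hr; have := hr; case/andP=> /negbTE r1 /negbTE r2.
move: (adj_R sigma) (adjE sigma); move: (adj sigma) => a ha E.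
rewrite qC E q_add q_add !q_if (qC r la) (qC r mu) r1 r2 !andbF !addbF.
have e := R1 (R_add hr ha).
by move: e; rewrite eps_add (negbTE (R1 hr)) (negbTE (R1 ha)); case: (q _ _).
Qed.

Lemma R4 a b : ~~ inR a -> ~~ inR b -> ~~ inR (a + b) -> q a b.
Proof.
move=> ha hb hab; have := R2 hab; rewrite eps_add (R2 ha) (R2 hb).
by case: (q a b).
Qed.

End Bad.

Lemma u0E : exists c : k, c != 0 /\ u 0 = c *: 1.
Proof.
have [c hc] : exists c, u 0 * u 0 = c *: u 0.
  apply: (@one_dim 0) _ (comp_u 0) (u_neq0 0).
  by have := compM (comp_u 0) (comp_u 0); rewrite addr0.
have h : u 0 = c *: 1.
  have := congr1 (fun z => z * (u 0)^-1) hc; rewrite /= mulrK ?u_unit //.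
  by rewrite -scalerAl mulrV ?u_unit.
exists c; split=> //; apply: contraNneq (u_neq0 0) => c0.
by rewrite h c0 scale0r.
Qed.

Lemma comp01 : comp 0 1.
Proof.
have [c [c0 h]] := u0E.
have -> : (1 : A) = c^-1 *: u 0 by rewrite h scalerA mulVf // scale1r.
by apply: compZ; apply: comp_u.
Qed.

Lemma comp0E x : comp 0 x -> exists a : k, x = a *: 1.
Proof.
case/compP=> a ->; have [c [_ h]] := u0E.
by exists (a * c); rewrite h scalerA.
Qed.

Lemma comp_inv l y : comp l y -> y \is a GRing.unit -> comp (- l) (y^-1).
Proof.
move=> hy uy.
have h0 : comp 0 (u (- l) * y) by have := compM (comp_u (- l)) hy; rewrite addNr.
have [c hc] := comp0E h0.
have c0 : c != 0.
  apply: contraTneq (unit_mul_neq0 (u_unit (- l)) uy) => c0.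
  by rewrite hc c0 scale0r eqxx.
have : u (- l) = c *: y^-1.
  have := congr1 (fun z => z * y^-1) hc; rewrite /= mulrK //.
  by rewrite -scalerAl mul1r.
move=> e; have -> : y^-1 = c^-1 *: u (- l) by rewrite e scalerA mulVf // scale1r.
by apply: compZ; apply: comp_u.
Qed.

Lemma comp_expn l x (j : nat) : comp l x -> comp (j%:Z *: l) (x ^+ j).
Proof.
move=> hx; elim: j => [|j IH]; first by rewrite scale0r expr0; apply: comp01.
by rewrite intS scalerDl scale1r exprS; apply: compM.
Qed.

Lemma comp_pow l x (z : int) : comp l x -> x \is a GRing.unit -> comp (z *: l) (x ^ z).
Proof.
move=> hx ux; case: z => j; first by apply: comp_expn.
rewrite NegzE scaleNr /exprz; apply: comp_inv; first by apply: comp_expn.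
by rewrite unitrX.
Qed.

Lemma comp_prod (I : Type) (r : seq I) (F : I -> A) (G : I -> lattice n) :
  (forall i, comp (G i) (F i)) -> comp (\sum_(i <- r) G i) (\prod_(i <- r) F i).
Proof.
move=> h; elim: r => [|i r IH]; first by rewrite !big_nil; apply: comp01.
by rewrite !big_cons; apply: compM.
Qed.

Lemma unit_prod (I : Type) (r : seq I) (F : I -> A) :
  (forall i, F i \is a GRing.unit) -> \prod_(i <- r) F i \is a GRing.unit.
Proof.
move=> h; elim: r => [|i r IH]; first by rewrite big_nil unitr1.
by rewrite big_cons unitrMl.
Qed.

Lemma not_good_bad : ~ Good -> exists la mu, [/\ eps la, eps mu, q la mu &
  forall nu, ~ (~~ eps (la + nu) /\ ~~ eps (mu - nu))].
Proof.
move=> hG; apply: NNPP => hn; apply: hG => la mu e1 e2 e3.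
apply: NNPP => hnu; apply: hn; exists la, mu; split=> // nu [h1 h2].
by apply: hnu; exists nu.
Qed.

Lemma bad_ij la mu : eps la -> eps mu -> q la mu ->
  exists (i j : 'I_n) (E : 'M[int]_n), [/\ i != j, E \in unitmx, q la (row i E),
    ~~ q la (row j E) & q mu (row j E)] /\
    (forall kk, kk != i -> kk != j -> ~~ q la (row kk E) && ~~ q mu (row kk E)).
Proof.
move=> e1 e2 e3; apply: (@lattice_basis n (q la) (q mu) la mu) => //.
- by move=> a b; apply: q_add.
- by move=> a b; apply: q_add.
- by rewrite qll.
- by rewrite qC.
Qed.

End Torus.


Definition o1 (m : nat) : 'I_(m.+2) := lift ord0 ord0.
Definition idx (m : nat) (t : 'I_m) : 'I_(m.+2) := lift ord0 (lift ord0 t).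

Definition vec (m : nat) (e : int * int * 'rV[int]_m) : 'rV[int]_(m.+2) :=
  e.1.1 *: delta_mx 0 ord0 + e.1.2 *: delta_mx 0 (o1 m)
  + \sum_t e.2 0 t *: delta_mx 0 (idx t).

Definition coords (m : nat) (w : 'rV[int]_(m.+2)) : int * int * 'rV[int]_m :=
  (w 0 ord0, w 0 (o1 m), \row_t w 0 (idx t)).

Lemma vecK m (w : 'rV[int]_(m.+2)) : vec (coords w) = w.
Proof.
rewrite {2}(row_sum_delta w) big_ord_recl big_ord_recl addrA /vec /coords /=.
by congr (_ + _); apply: eq_bigr => t _; rewrite mxE.
Qed.

Lemma vec_entry m (e : int * int * 'rV[int]_m) kk :
  vec e 0 kk = e.1.1 * (kk == ord0)%:R + e.1.2 * (kk == o1 m)%:R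
     + \sum_t e.2 0 t * (kk == idx t)%:R.
Proof. by rewrite !mxE summxE; congr (_ + _); apply: eq_bigr => t _; rewrite !mxE. Qed.

Lemma coordsK m (e : int * int * 'rV[int]_m) : coords (vec e) = e.
Proof.
case: e => [[a b] c]; rewrite /coords !vec_entry /=.
have n01 : (ord0 == o1 m) = false by apply/negbTE; apply: neq_lift.
have n0t t : (ord0 == idx t) = false by apply/negbTE; apply: neq_lift.
have n1t t : (o1 m == idx t) = false.
  by apply/negbTE; rewrite /o1 /idx (inj_eq lift_inj); apply: neq_lift.
congr (_, _, _).
- by rewrite mulr1 !mulr0 addr0 big1 ?addr0 // => t _; rewrite mulr0.
- by rewrite mulr1 !mulr0 add0r big1 ?addr0 // => t _; rewrite mulr0.
apply/rowP=> t; rewrite mxE vec_entry /= !mulr0 !add0r.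
rewrite (bigD1 t) //= eqxx mulr1 big1 ?addr0 // => t' ht'.
by rewrite /idx !(inj_eq lift_inj) eq_sym (negbTE ht') mulr0.
Qed.

Section Iso.
Variables (k : closedFieldType) (hchar : [pchar k] =i pred0)
    (A : unitAlgType k) (m : nat) (comp : lattice m.+2 -> A -> Prop)
    (inv : A -> A) (htorus : assoc_torus comp) (hinv : graded_involution comp inv).
Variable P : 'M[int]_(m.+2).
Hypothesis Pu : P \in unitmx.
Hypotheses (h0 : eps inv htorus (row ord0 P)) (h1 : eps inv htorus (row (o1 m) P))
  (h01 : q inv htorus (row ord0 P) (row (o1 m) P))
  (hT : forall t, ~~ eps inv htorus (row (idx t) P))
  (hTq : forall t s, q inv htorus s (row (idx t) P) = false).

Let X1 := u htorus (row ord0 P).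
Let X2 := u htorus (row (o1 m) P).
Let T := fun t : 'I_m => u htorus (row (idx t) P).
Let mono e := monomial X1 X2 T e.

Lemma degE (e : int * int * 'rV[int]_m) : vec e *m P =
  e.1.1 *: row ord0 P + e.1.2 *: row (o1 m) P + \sum_t e.2 0 t *: row (idx t) P.
Proof.
rewrite /vec !mulmxDl mulmx_suml -!scalemxAl -!rowE; congr (_ + _).
by apply: eq_bigr => t _; rewrite -scalemxAl -rowE.
Qed.

Lemma mono_comp e : comp (vec e *m P) (mono e).
Proof.
rewrite degE /mono /monomial; apply: (compM htorus); first apply: (compM htorus).
- by apply: (comp_pow htorus); [apply: comp_u| apply: u_unit].
- by apply: (comp_pow htorus); [apply: comp_u| apply: u_unit].
apply: (comp_prod htorus) => t.
by apply: (comp_pow htorus); [apply: comp_u| apply: u_unit].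
Qed.

Lemma mono_unit e : mono e \is a GRing.unit.
Proof.
rewrite /mono /monomial unitrMl; last by apply: unit_prod => t; apply: unitrXz; apply: u_unit.
by rewrite unitrMl; apply: unitrXz; apply: u_unit.
Qed.

Lemma iso_m : iso_Qm1_tensor_R inv m.
Proof.
have cu := comm_u hchar htorus hinv.
exists X1, X2, T; split; first by split; [apply: u_unit| split => [|*]; apply: u_unit].
split.
  split; first by rewrite /X1 /X2 (cu (row ord0 P) (row (o1 m) P)) h01 /= scaleN1r opprK.
  split; first by move=> i; rewrite /X1 /T (cu (row ord0 P) (row (idx i) P)) hTq /= scale1r.
  split; first by move=> i; rewrite /X2 /T (cu (row (o1 m) P) (row (idx i) P)) hTq /= scale1r.
  by move=> i j; rewrite /T (cu (row (idx i) P) (row (idx j) P)) hTq /= scale1r.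
split.
  split; first by rewrite /X1 inv_u // h0 /= scaleN1r.
  split; first by rewrite /X2 inv_u // h1 /= scaleN1r.
  by move=> i; rewrite /T inv_u // (negbTE (hT i)) /= scale1r.
split.
  move=> x; case: htorus => _ _ hdec _; have [s [f [hf xE]]] := hdec x.
  have H e : exists c, f (vec e *m P) = c *: mono e.
    apply: (one_dim htorus) (hf _) (mono_comp e) _.
    exact: unit_neq0 (mono_unit e).
  pose coef e := proj1_sig (constructive_indefinite_description _ (H e)).
  exists (map (fun l => coords (l *m invmx P)) s), coef.
  rewrite big_map xE; apply: eq_bigr => l _.
  have h := proj2_sig (constructive_indefinite_description _ (H (coords (l *m invmx P)))).
  have e1 : vec (coords (l *m invmx P)) *m P = l by rewrite vecK mulmxKV.
  by rewrite -{1}e1; exact: h.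
move=> s c us hs e he.
case: htorus => _ _ _ hind.
pose f' := fun l : lattice m.+2 => c (coords (l *m invmx P)) *: mono (coords (l *m invmx P)).
have can : cancel (fun e => vec e *m P) (fun l => coords (l *m invmx P)).
  by move=> e'; rewrite mulmxK // coordsK.
have := hind (map (fun e => vec e *m P) s) f'.
rewrite (map_inj_uniq (can_inj can)) big_map => /(_ us).
have hf' l : comp l (f' l).
  apply: (compZ htorus); have := mono_comp (coords (l *m invmx P)).
  by rewrite vecK mulmxKV.
move=> /(_ hf'); rewrite (eq_bigr (fun e => c e *: mono e)); last first.
  by move=> e' _; rewrite /f' can.
move=> /(_ hs (vec e *m P) (map_f _ he)) /eqP.
rewrite /f' can scaler_eq0 => /orP[/eqP //|].
by rewrite (negbTE (unit_neq0 (mono_unit e))).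
Qed.

End Iso.


Lemma perm01 m (i j : 'I_(m.+2)) : i != j ->
  exists s : {perm 'I_(m.+2)}, s ord0 = i /\ s (o1 m) = j.
Proof.
move=> ij; set j1 := tperm ord0 i j.
have j10 : j1 != ord0.
  apply: contra ij => /eqP e; apply/eqP; apply: (@perm_inj _ (tperm ord0 i)).
  by rewrite -/j1 e tpermR.
have o10 : o1 m != ord0 by rewrite eq_sym; apply: neq_lift.
exists (tperm (o1 m) j1 * tperm ord0 i)%g; rewrite !permM; split.
  by rewrite (tpermD o10 j10) tpermL.
by rewrite tpermL tpermK.
Qed.

Lemma bad_iso (k : closedFieldType) (hchar : [pchar k] =i pred0)
    (A : unitAlgType k) (m : nat) (comp : lattice m.+2 -> A -> Prop)
    (inv : A -> A) (htorus : assoc_torus comp) (hinv : graded_involution comp inv)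
    la mu (hla : eps inv htorus la) (hmu : eps inv htorus mu) (hq : q inv htorus la mu)
    (hno : forall nu, ~ (~~ eps inv htorus (la + nu) /\ ~~ eps inv htorus (mu - nu))) :
  iso_Qm1_tensor_R inv m.
Proof.
have [i [j [E [[ij Eu qi qj gj] hk]]]] := bad_ij hchar hinv hla hmu hq.
have [s [s0 s1]] := perm01 ij.
set P := perm_mx s *m E.
have rP kk : row kk P = row (s kk) E.
  by apply/rowP=> b; rewrite /P -row_permE !mxE.
have nR0 : ~~ inR inv htorus la mu (row i E) by rewrite /inR qi.
have nR1 : ~~ inR inv htorus la mu (row j E) by rewrite /inR gj andbF.
have nR01 : ~~ inR inv htorus la mu (row i E + row j E).
  by rewrite /inR q_add // qi (negbTE qj).
have RT t : inR inv htorus la mu (row (s (idx t)) E).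
  apply: hk.
    rewrite -s0; apply: contra_neq (@neq_lift _ ord0 (lift ord0 t)).
    by move/perm_inj/esym.
  rewrite -s1; apply: contra_neq (@neq_lift _ ord0 (lift ord0 t)).
  move/perm_inj; rewrite /idx /o1 => /lift_inj e; exfalso.
  by move: (@neq_lift _ ord0 t); rewrite e eqxx.
apply: (@iso_m k hchar A m comp inv htorus hinv P).
- by rewrite unitmx_mul unitmx_perm.
- by rewrite rP s0; apply: (R2 hchar hinv hla hmu hq hno).
- by rewrite rP s1; apply: (R2 hchar hinv hla hmu hq hno).
- rewrite !rP s0 s1; apply: (R4 hchar hinv hla hmu hq hno) => //.
- by move=> t; rewrite rP; apply: (R1 hchar hinv hla hmu hno).
- by move=> t sg'; rewrite rP; apply: (R3 hchar hinv hla hmu hq hno).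
Qed.

Unset Implicit Arguments.

Theorem lemma8p1 (k : closedFieldType) (hchar : [pchar k] =i pred0)
    (A : unitAlgType k) (n : nat) (comp : lattice n -> A -> Prop)
    (inv : A -> A)
    (htorus : assoc_torus comp)
    (hinv : graded_involution comp inv)
    (hnotiso : forall q : nat, ~ iso_Qm1_tensor_R inv q) :
  forall x y : A, inv x = - x -> inv y = - y ->
    in_span_sym_products inv (x * y - y * x).
Proof.
move=> x y hx hy.
have HG : Good inv htorus.
  apply: NNPP => nG; have [la [mu [hla hmu hq hno]]] := not_good_bad nG.
  move: comp inv htorus hinv hnotiso hx hy la mu hla hmu hq hno nG.
  case: n => [|[|m]] comp inv htorus hinv hnotiso hx hy la mu hla hmu hq hno nG.
  - have [i _] := bad_ij hchar hinv hla hmu hq.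
    by case: i.
  - have [i [j [E [[ij _ _ _ _] _]]]] := bad_ij hchar hinv hla hmu hq.
    by move: ij; rewrite (ord1 i) (ord1 j) eqxx.
  - exact: (hnotiso m (bad_iso hchar hinv hla hmu hq hno)).
exact: (good_case hchar hinv HG hx hy).
Qed.
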